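(* Consider the spot market described in the context, with fixed leader productions $\mathbf x\in\mathbb{R}_+^M$. Fix a follower $l$ and suppose $f_j=f$ for every follower $j\ne l$ (with $f_l$ arbitrary). Then the spot market has a unique Nash equilibrium $\mathbf y$, and it satisfies, for each $j\ne l$, \[y_j=\Big[\frac1N\Big(\alpha_y+f-\sum_{i=1}^Mx_i-y_l\Big)\Big]_0^k.\]
   Context: Model: $M\ge1$ leaders, $N\ge2$ followers; inverse demand $P(q)=\alpha-\beta q$, $\alpha,\beta>0$; follower marginal cost $c>0$; each follower has capacity $k>0$. Given leader productions $x_1,\dots,x_M\ge0$ and follower forward positions $f_1,\dots,f_N\in\mathbb{R}$, the spot market is the game among the $N$ followers in which follower $j$ chooses $y_j\in[0,k]$ to maximize $P(\sum_i x_i+\sum_{j'}y_{j'})(y_j-f_j)-cy_j$. Normalized follower demand: $\alpha_y=(\alpha-c)/\beta$. For $a\le b$, $[z]_a^b=\min(\max(z,a),b)$. *)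

(* Defs.v *)
From HB Require Import structures.
From mathcomp Require Import all_boot all_order all_algebra.
From mathcomp Require Import reals.
Set Implicit Arguments. Unset Strict Implicit. Unset Printing Implicit Defensive.
Import Order.TTheory GRing.Theory Num.Theory.
Local Open Scope ring_scope.

Definition clamp {R : realType} (a b z : R) : R := Num.min (Num.max z a) b.

Definition price {R : realType} (alpha beta q : R) : R := alpha - beta * q.

Definition alpha_y {R : realType} (alpha beta c : R) : R := (alpha - c) / beta.

Definition upd {R : realType} {N : nat} (y : 'I_N -> R) (j : 'I_N) (z : R) : 'I_N -> R :=
  fun j' => if j' == j then z else y j'.

Definition spot_payoff {R : realType} {M N : nat} (alpha beta c : R)
    (x : 'I_M -> R) (f : 'I_N -> R) (y : 'I_N -> R) (j : 'I_N) : R :=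
  price alpha beta (\sum_(i < M) x i + \sum_(j' < N) y j') * (y j - f j) - c * y j.

Definition spot_NE {R : realType} {M N : nat} (alpha beta c k : R)
    (x : 'I_M -> R) (f : 'I_N -> R) (y : 'I_N -> R) : Prop :=
  (forall j, 0 <= y j <= k) /\
  (forall j (z : R), 0 <= z <= k ->
     spot_payoff alpha beta c x f (upd y j z) j <= spot_payoff alpha beta c x f y j).

(* Main.v *)
Require Import Defs.
From HB Require Import structures.
From mathcomp Require Import all_boot all_order all_algebra.
From mathcomp Require Import reals ring lra.
From mathcomp Require Import all_classical all_reals topology normedtype.
Import Order.TTheory GRing.Theory Num.Theory.
Import numFieldNormedType.Exports.
Local Open Scope ring_scope.
Lemma clamp_spec (R : realType) (k z : R) : 0 <= k ->
  0 <= clamp 0 k z <= k /\ (0 < clamp 0 k z -> clamp 0 k z <= z) /\ (clamp 0 k z < k -> z <= clamp 0 k z).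
Proof.
move=> k0; rewrite /clamp /Order.max /Order.min.
case: (ltP z 0) => hz; case: (ltP 0 k) => hk0; try (case: (ltP z k) => hk);
  (split; [apply/andP; split|split=> h]); lra.
Qed.
Lemma clamp_uniq (R : realType) (k z w : R) :
  0 <= w <= k -> (0 < w -> w <= z) -> (w < k -> z <= w) -> 0 <= k -> w = clamp 0 k z.
Proof.
move=> /andP[w0 wk] h1 h2 k0.
have [/andP[v0 vk] [h3 h4]] := @clamp_spec _ k z k0.
move: v0 vk h3 h4; set v := clamp 0 k z => v0 vk h3 h4.
case: (ltgtP w v) => // hwv.
  have := h2 (lt_le_trans hwv vk); have := h3 (le_lt_trans w0 hwv). lra.
have := h4 (lt_le_trans hwv wk); have := h1 (le_lt_trans v0 hwv). lra.
Qed.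
Lemma sum_upd (R : realType) (N : nat) (y : 'I_N -> R) j z :
  \sum_(j' < N) upd y j z j' = \sum_(j' < N) y j' - y j + z.
Proof.
rewrite (bigD1 j) //= [X in _ = X - _ + _](bigD1 j) //= /upd eqxx.
rewrite (eq_bigr (fun i => y i)); last by move=> i /negbTE ->.
set s := \sum_(i < N | i != j) y i. by ring.
Qed.

Lemma payoff_diff (R : realType) (M N : nat) (alpha beta c : R)
    (x : 'I_M -> R) (f : 'I_N -> R) (y : 'I_N -> R) j z : beta != 0 ->
  spot_payoff alpha beta c x f (upd y j z) j - spot_payoff alpha beta c x f y j =
  beta * ((z - y j) * (alpha_y alpha beta c + f j - \sum_(i < M) x i - \sum_(j' < N) y j' - z)).
Proof.
move=> b0; rewrite /spot_payoff sum_upd /upd eqxx /price /alpha_y.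
by field.
Qed.

Lemma NE_iff (R : realType) (M N : nat) (alpha beta c k : R)
    (x : 'I_M -> R) (f : 'I_N -> R) (y : 'I_N -> R) : 0 < beta -> 0 < k ->
  spot_NE alpha beta c k x f y <->
  (forall j, y j = clamp 0 k (alpha_y alpha beta c + f j - \sum_(i < M) x i - \sum_(j' < N) y j')).
Proof.
move=> b0 k0; have b0' : beta != 0 by rewrite gt_eqF.
split.
  move=> [bd dev] j.
  set D := alpha_y alpha beta c + f j - \sum_(i < M) x i - \sum_(j' < N) y j'.
  have [w0 wk] : 0 <= y j /\ y j <= k by move: (bd j) => /andP.
  have key : forall z, 0 <= z <= k -> (z - y j) * (D - z) <= 0.
    move=> z hz; have := dev j z hz; rewrite -subr_le0 payoff_diff // pmulr_rle0 //.
  apply: (@clamp_uniq _ k D (y j)); last (by apply: ltW); first by rewrite w0 wk.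
    move=> wp; rewrite leNgt; apply/negP => Dw.
    case: (leP 0 D) => hD.
      have := key ((y j + D) / 2%:R); rewrite -/D.
      have -> : 0 <= (y j + D) / 2%:R <= k by apply/andP; split; lra.
      move=> /(_ isT); nra.
    have := key (y j / 2%:R); rewrite -/D.
    have -> : 0 <= y j / 2%:R <= k by apply/andP; split; lra.
    move=> /(_ isT); nra.
  move=> wp; rewrite leNgt; apply/negP => Dw.
  case: (leP D k) => hD.
    have := key ((y j + D) / 2%:R); rewrite -/D.
    have -> : 0 <= (y j + D) / 2%:R <= k by apply/andP; split; lra.
    move=> /(_ isT); nra.
  have := key ((y j + k) / 2%:R); rewrite -/D.
  have -> : 0 <= (y j + k) / 2%:R <= k by apply/andP; split; lra.
  move=> /(_ isT); nra.
move=> H; split.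
  move=> j; have [] := @clamp_spec _ k (alpha_y alpha beta c + f j - \sum_(i < M) x i - \sum_(j' < N) y j') (ltW k0); by rewrite -H.
move=> j z /andP[z0 zk]; rewrite -subr_le0 payoff_diff //.
rewrite pmulr_rle0 //.
set D := alpha_y alpha beta c + f j - \sum_(i < M) x i - \sum_(j' < N) y j'.
have Hj : y j = clamp 0 k D := H j.
have [/andP[w0 wk] [h1 h2]] := @clamp_spec _ k D (ltW k0).
rewrite -Hj in w0 wk h1 h2.
case: (ltgtP 0 (y j)) => a; case: (ltgtP (y j) k) => b; try lra.
- have := h1 a; have := h2 b; move=> u v; have -> : D = y j by lra. rewrite -opprB mulNr oppr_le0 -expr2; exact: sqr_ge0.
- have u := h1 a.
  have -> : (z - y j) * (D - z) = - ((y j - z) * (D - z)) by ring.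
  rewrite oppr_le0; apply: mulr_ge0; lra.
- have u := h2 b; apply: mulr_ge0_le0; lra.
Qed.

Lemma clamp_mono (R : realType) (k z1 z2 : R) : z1 <= z2 -> clamp 0 k z1 <= clamp 0 k z2.
Proof.
move=> h; rewrite /clamp /Order.max /Order.min.
by case: (ltP z1 0); case: (ltP z2 0); repeat case: ifP => ?; lra.
Qed.

Lemma clamp_cont (R : realType) (k a : R) :
  continuous (fun S : R => clamp 0 k (a - S)).
Proof.
move=> S; rewrite /clamp.
apply: (@continuous_min R R (fun S => Num.max (a - S) 0) (fun _ => k)).
  apply: (@continuous_max R R (fun S => a - S) (fun _ => 0)).
    apply: continuousB; [exact: cvg_cst|exact: cvg_id].
  exact: cvg_cst.
exact: cvg_cst.
Qed.

Lemma exfix (R : realType) (k a b n : R) : 0 <= k -> 0 <= n ->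
  exists S, S = clamp 0 k (a - S) + n * clamp 0 k (b - S).
Proof.
move=> k0 n0.
pose g := fun S => S - (clamp 0 k (a - S) + n * clamp 0 k (b - S)).
have hc : continuous g.
  move=> S; apply: cvgB; first exact: cvg_id.
  apply: cvgD; first exact: clamp_cont.
  apply: cvgM; first exact: cvg_cst. exact: clamp_cont.
have bnd : forall z, 0 <= clamp 0 k z /\ clamp 0 k z <= k.
  by move=> z; have [/andP[]] := @clamp_spec _ k z k0.
have [S _ HS] : exists2 S, S \in `[0, k + n * k] & g S = 0.
  apply: IVT.
  - have := mulr_ge0 n0 k0; lra.
  - by apply: continuous_subspaceT.
  - have [u1 u2] := bnd (a - 0); have [u3 u4] := bnd (b - 0).
    have [u5 u6] := bnd (a - (k + n * k)); have [u7 u8] := bnd (b - (k + n * k)).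
    have u9 := mulr_ge0 n0 u3; have u10 : n * clamp 0 k (b - (k + n * k)) <= n * k.
      by apply: ler_wpM2l.
    rewrite /g /Order.min /Order.max; repeat case: ifP => ?; apply/andP; split; lra.
by exists S; apply/eqP; rewrite -subr_eq0; apply/eqP.
Qed.

Theorem proposition1 (R : realType) (M N : nat) (alpha beta c k : R)
    (x : 'I_M -> R) (fv : 'I_N -> R) (l : 'I_N) (f : R) :
  (1 <= M)%N -> (2 <= N)%N ->
  0 < alpha -> 0 < beta -> 0 < c -> 0 < k ->
  (forall i, 0 <= x i) ->
  (forall j, j != l -> fv j = f) ->
  exists y : 'I_N -> R,
    spot_NE alpha beta c k x fv y /\
    (forall y' : 'I_N -> R, spot_NE alpha beta c k x fv y' -> forall j, y' j = y j) /\
    (forall j, j != l ->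
       y j = clamp 0 k ((alpha_y alpha beta c + f - \sum_(i < M) x i - y l) / N%:R)).
Proof.
move=> M1 N2 a0 b0 c0 k0 x0 hf.
set X := \sum_(i < M) x i; set ay := alpha_y alpha beta c.
set n : R := (N.-1)%:R.
have n0 : 0 <= n by rewrite /n ler0n.
have [S HS] := @exfix _ k (ay + fv l - X) (ay + f - X) n (ltW k0) n0.
pose y := fun j => clamp 0 k (ay + fv j - X - S).
have sumy' : \sum_(j < N) y j = y l + n * clamp 0 k (ay + f - X - S).
  rewrite (bigD1 l) //=; congr (_ + _).
  rewrite (eq_bigr (fun _ => clamp 0 k (ay + f - X - S))); last first.
    by move=> j /hf hj; rewrite /y hj.
  rewrite sumr_const.
  have -> : #|(fun i : 'I_N => i != l)| = N.-1.
    by have := cardC1 l; rewrite card_ord => <-; apply: eq_card.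
  by rewrite -mulr_natl.
have sumy : \sum_(j < N) y j = S by rewrite sumy' [in RHS]HS.
have NEy : spot_NE alpha beta c k x fv y.
  by apply/NE_iff => // j; rewrite sumy.
exists y; split; first exact: NEy.
split.
  move=> y' /NE_iff H' j.
  have {}H' := H' b0 k0.
  set S' := \sum_(j' < N) y' j' in H'.
  suff eS : S' = S by rewrite H' eS.
  apply/eqP; rewrite eq_le; apply/andP; split; rewrite leNgt; apply/negP => lt.
    have : S' <= S.
      rewrite -sumy /S'; apply: ler_sum => i _; rewrite H' /y; apply: clamp_mono.
      rewrite -/X -/ay; lra.
    lra.
  have : S <= S'.
    rewrite -sumy /S'; apply: ler_sum => i _; rewrite H' /y; apply: clamp_mono.
    rewrite -/X -/ay; lra.
  lra.
move=> j hj.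
have yj : y j = clamp 0 k (ay + f - X - S) by rewrite /y hf.
have [/andP[v0 vk] [h1 h2]] := @clamp_spec _ k (ay + f - X - S) (ltW k0).
rewrite -yj in v0 vk h1 h2 sumy'.
have hS : S = y l + n * y j by rewrite -sumy sumy'.
have hN : N%:R = n + 1 :> R.
  by rewrite /n natr1 prednK // (ltn_trans _ N2).
set B := ay + f - X - y l.
set q := B / N%:R.
have Bq : B = q * (n + 1) by rewrite /q hN mulrVK // unitfE; lra.
apply: (@clamp_uniq _ k q (y j)); [by rewrite v0 vk| | |exact: ltW].
  move=> /h1 h.
  have e : (n + 1) * (y j - q) <= 0.
    have -> : (n + 1) * (y j - q) = y j + n * y j - B by rewrite Bq; ring.
    rewrite /B; lra.
  by move: e; rewrite pmulr_rle0 ?subr_le0 //; lra.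
move=> /h2 h.
have e : 0 <= (n + 1) * (y j - q).
  have -> : (n + 1) * (y j - q) = y j + n * y j - B by rewrite Bq; ring.
  rewrite /B; lra.
by move: e; rewrite pmulr_rge0 ?subr_ge0 //; lra.
Qed.
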